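(* There is a bijection between zero-dimensional tropical ideals of degree $3$ in $\mathbb{B}[x_1^{\pm1},\dots,x_n^{\pm1}]$ and pairs $(L,\mathcal{P})$, where $L$ is a sublattice of $\mathbb{Z}^n$ and $\mathcal{P}$ is a $2$-partition of the quotient group $\mathbb{Z}^n/L$ that is invariant under the action of $\mathbb{Z}^n$. The bijection sends a tropical ideal $I$ to the pair $(L_I,\mathcal{H}(\operatorname{si}(\underline{M}(I))))$.
   Context: $\mathbb{B}=\{\infty,0\}$ with $\oplus=\min$ and multiplication $+$; $\operatorname{supp}(f)$ is the set of exponents with coefficient $\neq\infty$. A tropical ideal $I\subset\mathbb{B}[x_1^{\pm1},\dots,x_n^{\pm1}]$ is an ideal such that for all $f,g\in I$ and $\mathbf u\in\operatorname{supp}(f)\cap\operatorname{supp}(g)$ there is $h\in I$ with $\operatorname{supp}(f)\Delta\operatorname{supp}(g)\subset\operatorname{supp}(h)\subset(\operatorname{supp}(f)\cup\operatorname{supp}(g))\setminus\{\mathbf u\}$. Its underlying matroid $\underline M(I)$ is the finitary matroid on $\mathbb{Z}^n$ whose independent sets are those containing no support of a polynomial in $I$. $I$ is zero-dimensional of degree $r$ iff $\underline M(I)$ has finite rank $r$. The binomial lattice is $L_I=\{\mathbf u-\mathbf v:\mathbf x^{\mathbf u}\oplus\mathbf x^{\mathbf v}\in I\}\cup\{\mathbf 0\}$, a sublattice of $\mathbb{Z}^n$. For a loopless finitary matroid $M$ on $E$, $a\sim b$ (parallel) iff $a=b$ or $\{a,b\}$ is a circuit; the simplification $\operatorname{si}(M)$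 is the matroid on $E/\!\sim$ whose circuits are the sets $\{[a_1],\dots,[a_k]\}$ with $\{a_1,\dots,a_k\}$ a circuit of $M$ (here the parallel classes of $\underline M(I)$ are the cosets of $L_I$). $\mathcal H(M)$ denotes the set of hyperplanes (maximal subsets of rank $\operatorname{rank}(M)-1$). A $2$-partition of a set $E$ is a collection of subsets (blocks) with at least two blocks, every block of size $\ge2$, and every $2$-subset of $E$ in exactly one block. $\mathbb{Z}^n$ acts on $\mathbb{Z}^n/L$ by translation, hence on subsets and on collections of subsets; invariance means fixed by all $\mathbf u\in\mathbb{Z}^n$. *)

(* Defs.v *)
From HB Require Import structures.
From mathcomp Require Import all_boot all_order all_algebra.
From mathcomp Require Import finmap.
From mathcomp Require Import boolp classical_sets functions.

Set Implicit Arguments.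
Unset Strict Implicit.
Unset Printing Implicit Defensive.

Import GRing.Theory.
Local Open Scope ring_scope.
Local Open Scope classical_set_scope.

Definition Zn (n : nat) := 'rV[int]_n.

(* A polynomial of B[x_1^{+-1},...,x_n^{+-1}], B = ({oo,0}, min, +), is
   determined by its support, a finite subset of Z^n:
   supp (f (+) g) = supp f U supp g,  supp (f (.) g) = supp f + supp g
   (Minkowski sum), the zero polynomial oo has empty support. *)
Definition Bpoly (n : nat) := {fset Zn n}.

Definition Badd n (f g : Bpoly n) : Bpoly n := (f `|` g)%fset.
Definition Bmul n (f g : Bpoly n) : Bpoly n := [fset (a + b)%R | a in f, b in g]%fset.
Definition Bzero n : Bpoly n := fset0.
Definition Bsupp n (f : Bpoly n) : set (Zn n) := [set u | u \in f].

Definition is_ideal n (I : set (Bpoly n)) : Prop :=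
  I (Bzero n) /\
  (forall f g, I f -> I g -> I (Badd f g)) /\
  (forall f g, I f -> I (Bmul g f)).

Definition is_tropical_ideal n (I : set (Bpoly n)) : Prop :=
  is_ideal I /\
  forall f g u, I f -> I g -> Bsupp f u -> Bsupp g u ->
    exists h, I h /\
      ((Bsupp f `\` Bsupp g) `|` (Bsupp g `\` Bsupp f)) `<=` Bsupp h /\
      Bsupp h `<=` ((Bsupp f `|` Bsupp g) `\ u).

Definition rank_ge (E : Type) (indep : set E -> Prop) (A : set E) (k : nat) : Prop :=
  exists f : 'I_k -> E, injective f /\ range f `<=` A /\ indep (range f).

Definition has_rank (E : Type) (indep : set E -> Prop) (A : set E) (r : nat) : Prop :=
  rank_ge indep A r /\ ~ rank_ge indep A r.+1.

Definition hyperplanes (E : Type) (indep : set E -> Prop) (G : set E) : set (set E) :=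
  [set H | exists r, has_rank indep G r /\ H `<=` G /\ has_rank indep H r.-1 /\
     forall H', H `<=` H' -> H' `<=` G -> has_rank indep H' r.-1 -> H' = H].

Definition indep_of_circuits (E : Type) (circ : set (set E)) (A : set E) : Prop :=
  forall C, circ C -> ~ (C `<=` A).

Definition indepM n (I : set (Bpoly n)) (A : set (Zn n)) : Prop :=
  forall f, I f -> f != Bzero n -> ~ (Bsupp f `<=` A).

Definition circM n (I : set (Bpoly n)) (C : set (Zn n)) : Prop :=
  ~ indepM I C /\ forall D, D `<` C -> indepM I D.

Definition zero_dim_of_degree n (I : set (Bpoly n)) (r : nat) : Prop :=
  has_rank (indepM I) setT r.

Definition binomial_lattice n (I : set (Bpoly n)) : set (Zn n) :=
  [set w | w = 0 \/ exists u v, I [fset u; v]%fset /\ w = u - v].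

Definition parallel n (I : set (Bpoly n)) (a b : Zn n) : Prop :=
  a = b \/ circM I [set a; b].

Definition pclass n (I : set (Bpoly n)) (a : Zn n) : set (Zn n) :=
  [set b | parallel I a b].

Definition si_ground n (I : set (Bpoly n)) : set (set (Zn n)) := range (pclass I).

Definition si_circuits n (I : set (Bpoly n)) : set (set (set (Zn n))) :=
  [set D | exists C, circM I C /\
     (forall a b, C a -> C b -> pclass I a = pclass I b -> a = b) /\
     D = pclass I @` C].

Definition si_hyperplanes n (I : set (Bpoly n)) : set (set (set (Zn n))) :=
  hyperplanes (fun A => A `<=` si_ground I /\ indep_of_circuits (si_circuits I) A)
              (si_ground I).

Definition is_sublattice n (L : set (Zn n)) : Prop :=
  L 0 /\ forall a b, L a -> L b -> L (a - b).

Definition coset n (L : set (Zn n)) (a : Zn n) : set (Zn n) := [set b | L (b - a)].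

Definition quotient n (L : set (Zn n)) : set (set (Zn n)) := range (coset L).

Definition two_partition (T : Type) (G : set T) (P : set (set T)) : Prop :=
  (forall B, P B -> B `<=` G) /\
  (exists B1 B2, P B1 /\ P B2 /\ B1 <> B2) /\
  (forall B, P B -> exists a b, B a /\ B b /\ a <> b) /\
  (forall a b, G a -> G b -> a <> b -> exists! B, P B /\ B a /\ B b).

Definition transl n (u : Zn n) (C : set (Zn n)) : set (Zn n) := [set b | C (b - u)].

Definition invariant_collection n (P : set (set (set (Zn n)))) : Prop :=
  forall u : Zn n, (fun B => transl u @` B) @` P = P.

Definition admissible_pair n (LP : set (Zn n) * set (set (set (Zn n)))) : Prop :=
  is_sublattice LP.1 /\ two_partition (quotient LP.1) LP.2 /\ invariant_collection LP.2.

Definition zd3_tropical_ideal n (I : set (Bpoly n)) : Prop :=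
  is_tropical_ideal I /\ zero_dim_of_degree I 3.

Definition Phi n (I : set (Bpoly n)) : set (Zn n) * set (set (set (Zn n))) :=
  (binomial_lattice I, si_hyperplanes I).

(* Main.v *)
Require Import Defs.
From mathcomp Require Import all_boot all_order all_algebra.
From mathcomp Require Import finmap.
From mathcomp Require Import boolp classical_sets functions.
Set Implicit Arguments.
Unset Strict Implicit.
Unset Printing Implicit Defensive.
Local Open Scope classical_set_scope.

Lemma EMp (P : Prop) : P \/ ~ P.
Proof. by case: (pselect P); [left|right]. Qed.

Definition colB T (P : set (set T)) (X Y Z : T) := exists B, P B /\ B X /\ B Y /\ B Z.
Definition ncol T (P : set (set T)) (X Y Z : T) :=
  X <> Y /\ X <> Z /\ Y <> Z /\ ~ colB P X Y Z.
Definition clK T (P : set (set T)) (K : set T) (Z : T) : Prop :=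
  K Z \/ (exists X Y, K X /\ K Y /\ X <> Y /\ colB P X Y Z) \/
  (exists X Y W, K X /\ K Y /\ K W /\ ncol P X Y W).

Lemma colB_perm1 T (P : set (set T)) X Y Z : colB P X Y Z -> colB P Y X Z.
Proof. by case=> B [? [? [? ?]]]; exists B. Qed.
Lemma colB_perm2 T (P : set (set T)) X Y Z : colB P X Y Z -> colB P X Z Y.
Proof. by case=> B [? [? [? ?]]]; exists B. Qed.
Lemma ncol_perm1 T (P : set (set T)) X Y Z : ncol P X Y Z -> ncol P Y X Z.
Proof. case=> [a [b [c H]]]; split; [exact: nesym|split=>//; split=>//] => h; apply: H; exact: colB_perm1. Qed.
Lemma ncol_perm2 T (P : set (set T)) X Y Z : ncol P X Y Z -> ncol P X Z Y.
Proof. case=> [a [b [c H]]]; split=>//; split=>//; split; [exact: nesym|] => h; apply: H; exact: colB_perm2. Qed.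

Lemma tp_sub T (G : set T) P B X : two_partition G P -> P B -> B X -> G X.
Proof. by case=> H _ PB BX; apply: H PB _ BX. Qed.

Lemma uniq_block T (G : set T) P B B' X Y : two_partition G P ->
  P B -> P B' -> B X -> B Y -> B' X -> B' Y -> X <> Y -> B = B'.
Proof.
move=> tp PB PB' BX BY B'X B'Y XY.
have GX := tp_sub tp PB BX; have GY := tp_sub tp PB BY.
case: tp => _ [_ [_ H]]; case: (H X Y GX GY XY) => B0 [_ U].
by rewrite -(U B) // -(U B').
Qed.

Lemma block_ex T (G : set T) P X Y : two_partition G P -> G X -> G Y -> X <> Y ->
  exists B, P B /\ B X /\ B Y.
Proof. by case=> _ [_ [_ H]] GX GY XY; case: (H X Y GX GY XY) => B [? _]; exists B. Qed.

Lemma clK_sub T (P : set (set T)) K : K `<=` clK P K.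
Proof. by move=> x Kx; left. Qed.

Lemma clK_mono T (P : set (set T)) K K' : K `<=` K' -> clK P K `<=` clK P K'.
Proof.
move=> s z [Kz|[[X [Y [? [? [? ?]]]]]|[X [Y [W [? [? [? ?]]]]]]]]; first by left; apply: s.
  by right; left; exists X, Y; do !split=> //; apply: s.
by right; right; exists X, Y, W; do !split=> //; apply: s.
Qed.

Lemma ncol_of_notcol T (G : set T) P X1 X2 Z : two_partition G P -> G X1 -> G X2 ->
  X1 <> X2 -> ~ colB P X1 X2 Z -> ncol P X1 X2 Z.
Proof.
move=> tp G1 G2 d nc; do 3?split => //.
- by move=> e; subst Z; apply: nc; case: (block_ex tp G1 G2 d) => B [? [? ?]]; exists B.
- by move=> e; subst Z; apply: nc; case: (block_ex tp G1 G2 d) => B [? [? ?]]; exists B.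
Qed.

Lemma ncol_out T (G : set T) P B W1 W2 X : two_partition G P -> P B -> B W1 -> B W2 ->
  W1 <> W2 -> ~ B X -> ncol P W1 W2 X.
Proof.
move=> tp PB B1 B2 d nX; split=> //; split; first by move=> e; subst X.
split; first by move=> e; subst X.
case=> B'' [P'' [b1 [b2 bx]]]; apply: nX.
by rewrite (uniq_block tp PB P'' B1 B2 b1 b2 d).
Qed.

Lemma clK_ncol T (P : set (set T)) K X Y W Z : K X -> K Y -> K W -> ncol P X Y W -> clK P K Z.
Proof. by move=> *; right; right; exists X, Y, W. Qed.

Lemma C2b_core T (G : set T) P K X1 U Y : two_partition G P -> K `<=` G ->
  K X1 -> X1 <> U -> colB P X1 U Y -> clK P K U -> clK P K Y.
Proof.
move=> tp KG K1 d [B [PB [B1 [BU BY]]]] [KU|[[W1 [W2 [K1' [K2 [dW [B' [PB' [b1 [b2 bU]]]]]]]]]|H]].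
- by right; left; exists X1, U; do !split=> //; exists B.
- case: (EMp (B' X1)) => bX1.
    have eB := uniq_block tp PB PB' B1 BU bX1 bU d.
    by right; left; exists W1, W2; do !split=> //; exists B'; rewrite -eB; do !split=> //; rewrite eB.
  exact: (clK_ncol _ K1' K2 K1 (ncol_out tp PB' b1 b2 dW bX1)).
- by right; right.
Qed.

Lemma C2c_core T (G : set T) P K X1 X2 U Y : two_partition G P -> K `<=` G ->
  K X1 -> K X2 -> ncol P X1 X2 U -> clK P K U -> clK P K Y.
Proof.
move=> tp KG K1 K2 nc [KU|[[W1 [W2 [K1' [K2' [dW [B' [PB' [b1 [b2 bU]]]]]]]]]|H]].
- exact: (clK_ncol _ K1 K2 KU nc).
- have [d12 [_ [_ nc']]] := nc.
  case: (block_ex tp (KG _ K1) (KG _ K2) d12) => B0 [PB0 [B01 B02]].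
  have nB0U : ~ B0 U by move=> h; apply: nc'; exists B0.
  case: (EMp (B0 W1)) => h1; last first.
    exact: (clK_ncol _ K1 K2 K1' (ncol_out tp PB0 B01 B02 d12 h1)).
  case: (EMp (B0 W2)) => h2; last first.
    exact: (clK_ncol _ K1 K2 K2' (ncol_out tp PB0 B01 B02 d12 h2)).
  by exfalso; apply: nB0U; rewrite (uniq_block tp PB0 PB' h1 h2 b1 b2 dW).
- by case: H => [A [B [C [? [? [? ?]]]]]]; right; right; exists A, B, C.
Qed.

Lemma C2 T (G : set T) P K U Y : two_partition G P -> K `<=` G ->
  clK P K U -> clK P (K `|` [set U]) Y -> clK P K Y.
Proof.
move=> tp KG cU [[KY|->]|[[X1 [X2 [k1 [k2 [d c]]]]]|[X1 [X2 [X3 [k1 [k2 [k3 nc]]]]]]]] //.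
- by left.
- case: k1 => [k1|e1]; case: k2 => [k2|e2].
  + by right; left; exists X1, X2.
  + rewrite e2 in d c; exact: (C2b_core tp KG k1 d c cU).
  + rewrite e1 in d c; apply: (C2b_core tp KG k2 (nesym d) (colB_perm1 c) cU).
  + by rewrite e1 e2 in d.
- case: k1 => [k1|e1]; case: k2 => [k2|e2]; case: k3 => [k3|e3].
  + exact: (clK_ncol _ k1 k2 k3 nc).
  + rewrite e3 in nc; exact: (C2c_core _ tp KG k1 k2 nc cU).
  + rewrite e2 in nc; exact: (C2c_core _ tp KG k1 k3 (ncol_perm2 nc) cU).
  + by case: nc => _ [_ [d _]]; rewrite e2 e3 in d.
  + rewrite e1 in nc; exact: (C2c_core _ tp KG k2 k3 (ncol_perm2 (ncol_perm1 nc)) cU).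
  + by case: nc => _ [d _]; rewrite e1 e3 in d.
  + by case: nc => [d _]; rewrite e1 e2 in d.
  + by case: nc => [d _]; rewrite e1 e2 in d.
Qed.

Lemma C3c_core T (P : set (set T)) K X1 X2 Z Y :
  K X1 -> K X2 -> ncol P X1 X2 Z -> ~ clK P K Y -> clK P (K `|` [set Y]) Z.
Proof.
move=> k1 k2 [d _] nY.
have nK : ~ K Y by move=> h; apply: nY; left.
apply: (@clK_ncol _ _ _ X1 X2 Y); [by left|by left|by right|].
split=> //; split; first by move=> e; subst Y.
split; first by move=> e; subst Y.
by move=> c; apply: nY; right; left; exists X1, X2.
Qed.

Lemma C3 T (P : set (set T)) K Z Y :
  clK P (K `|` [set Z]) Y -> ~ clK P K Y -> clK P (K `|` [set Y]) Z.
Proof.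
move=> cY nY.
have nK : ~ K Y by move=> h; apply: nY; left.
case: cY => [[KY|->]|[[X1 [X2 [k1 [k2 [d c]]]]]|[X1 [X2 [X3 [k1 [k2 [k3 nc]]]]]]]] //.
- by left; right.
- case: k1 => [k1|e1]; case: k2 => [k2|e2].
  + by exfalso; apply: nY; right; left; exists X1, X2.
  + rewrite e2 in d c; right; left; exists X1, Y; do !split; [by left|by right| |exact: colB_perm2].
    by move=> e; subst Y.
  + rewrite e1 in d c; right; left; exists X2, Y; do !split; [by left|by right| |].
      by move=> e; subst Y.
    exact: colB_perm2 (colB_perm1 c).
  + by rewrite e1 e2 in d.
- case: k1 => [k1|e1]; case: k2 => [k2|e2]; case: k3 => [k3|e3].
  + by exfalso; apply: nY; apply: (clK_ncol _ k1 k2 k3 nc).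
  + rewrite e3 in nc; exact: (C3c_core k1 k2 nc nY).
  + rewrite e2 in nc; exact: (C3c_core k1 k3 (ncol_perm2 nc) nY).
  + by case: nc => _ [_ [d _]]; rewrite e2 e3 in d.
  + rewrite e1 in nc; exact: (C3c_core k2 k3 (ncol_perm2 (ncol_perm1 nc)) nY).
  + by case: nc => _ [d _]; rewrite e1 e3 in d.
  + by case: nc => [d _]; rewrite e1 e2 in d.
  + by case: nc => [d _]; rewrite e1 e2 in d.
Qed.

Definition o3_0 : 'I_3 := @Ordinal 3 0 isT.
Definition o3_1 : 'I_3 := @Ordinal 3 1 isT.
Definition o3_2 : 'I_3 := @Ordinal 3 2 isT.
Lemma ord3 (i : 'I_3) : i = o3_0 \/ i = o3_1 \/ i = o3_2.
Proof.
case: i => [[|[|[|m]]] Hi]; [left|right;left|right;right|by []]; by apply: val_inj.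
Qed.
Definition o2_0 : 'I_2 := @Ordinal 2 0 isT.
Definition o2_1 : 'I_2 := @Ordinal 2 1 isT.
Lemma ord2 (i : 'I_2) : i = o2_0 \/ i = o2_1.
Proof. case: i => [[|[|m]] Hi]; [left|right|by []]; by apply: val_inj. Qed.
Definition o4_0 : 'I_4 := @Ordinal 4 0 isT.
Definition o4_1 : 'I_4 := @Ordinal 4 1 isT.
Definition o4_2 : 'I_4 := @Ordinal 4 2 isT.
Definition o4_3 : 'I_4 := @Ordinal 4 3 isT.

Lemma o4_neq : o4_0 <> o4_1 /\ o4_0 <> o4_2 /\ o4_0 <> o4_3 /\ o4_1 <> o4_2 /\ o4_1 <> o4_3 /\ o4_2 <> o4_3.
Proof. by do !split; move/(congr1 val). Qed.
Lemma o3_neq : o3_0 <> o3_1 /\ o3_0 <> o3_2 /\ o3_1 <> o3_2.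
Proof. by do !split; move/(congr1 val). Qed.

Definition mk2 T (a b : T) (i : 'I_2) : T := if (val i == 0)%N then a else b.
Definition mk3 T (a b c : T) (i : 'I_3) : T :=
  if (val i == 0)%N then a else if (val i == 1)%N then b else c.

Lemma range3 T (f : 'I_3 -> T) : range f = [set f o3_0; f o3_1; f o3_2].
Proof.
apply/seteqP; split=> x.
  by case=> i _ <-; case: (ord3 i) => [->|[->|->]]; [left;left|left;right|right].
by case=> [[->|->]|->]; eexists.
Qed.

Lemma range2 T (f : 'I_2 -> T) : range f = [set f o2_0; f o2_1].
Proof.
apply/seteqP; split=> x.
  by case=> i _ <-; case: (ord2 i) => [->|->]; [left|right].
by case=> ->; eexists.
Qed.

Lemma mk3_range T (a b c : T) : range (mk3 a b c) = [set a; b; c].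
Proof. by rewrite range3. Qed.
Lemma mk2_range T (a b : T) : range (mk2 a b) = [set a; b].
Proof. by rewrite range2. Qed.

Lemma mk3_inj T (a b c : T) : a <> b -> a <> c -> b <> c -> injective (mk3 a b c).
Proof.
move=> ab ac bc i j.
by case: (ord3 i) => [->|[->|->]]; case: (ord3 j) => [->|[->|->]]; rewrite /mk3 /=; congruence.
Qed.
Lemma mk2_inj T (a b : T) : a <> b -> injective (mk2 a b).
Proof.
move=> ab i j.
by case: (ord2 i) => [->|->]; case: (ord2 j) => [->|->]; rewrite /mk2 /=; congruence.
Qed.

Lemma rg3_ex T (Ind : set T -> Prop) A : rank_ge Ind A 3 ->
  exists a b c, a <> b /\ a <> c /\ b <> c /\ A a /\ A b /\ A c /\ Ind [set a; b; c].
Proof.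
case=> f [fi [fA fI]]; exists (f o3_0), (f o3_1), (f o3_2).
have [n01 [n02 n12]] := o3_neq.
do 3?(split; first by move/fi).
do 3?(split; first by apply: fA; eexists).
by rewrite -range3.
Qed.

Lemma rg3_of T (Ind : set T -> Prop) A a b c : a <> b -> a <> c -> b <> c ->
  A a -> A b -> A c -> Ind [set a; b; c] -> rank_ge Ind A 3.
Proof.
move=> ab ac bc Aa Ab Ac I; exists (mk3 a b c); split; first exact: mk3_inj.
rewrite mk3_range; split=> // x [[->|->]|->] //.
Qed.

Lemma rg2_ex T (Ind : set T -> Prop) A : rank_ge Ind A 2 ->
  exists a b, a <> b /\ A a /\ A b /\ Ind [set a; b].
Proof.
case=> f [fi [fA fI]]; exists (f o2_0), (f o2_1).
split; first by move/fi/(congr1 val).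
do 2?(split; first by apply: fA; eexists).
by rewrite -range2.
Qed.

Lemma rg2_of T (Ind : set T -> Prop) A a b : a <> b ->
  A a -> A b -> Ind [set a; b] -> rank_ge Ind A 2.
Proof.
move=> ab Aa Ab I; exists (mk2 a b); split; first exact: mk2_inj.
rewrite mk2_range; split=> // x [->|->] //.
Qed.

Lemma rg4_ex T (Ind : set T -> Prop) A : rank_ge Ind A 4 ->
  exists f : 'I_4 -> T, injective f /\ A (f o4_0) /\ A (f o4_1) /\ A (f o4_2) /\ A (f o4_3)
   /\ Ind (range f).
Proof.
case=> f [fi [fA fI]]; exists f; split=> //.
by do 4?(split; first by apply: fA; eexists).
Qed.

Definition SIg T (G : set T) (P : set (set T)) (S : set T) : Prop :=
  S `<=` G /\
  (forall A B C D, S A -> S B -> S C -> S D -> A <> B -> A <> C -> A <> D ->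
     B <> C -> B <> D -> C <> D -> False) /\
  (forall A B C, S A -> S B -> S C -> A <> B -> A <> C -> B <> C -> ~ colB P A B C).

Lemma in3_cover T (X Y Z A B C W : T) :
  [set X; Y; Z] A -> [set X; Y; Z] B -> [set X; Y; Z] C -> A <> B -> A <> C -> B <> C ->
  [set X; Y; Z] W -> W = A \/ W = B \/ W = C.
Proof.
by move=> [[->|->]|->] [[->|->]|->] [[->|->]|->] ab ac bc [[->|->]|->];
  first [by left | by right; left | by right; right | exfalso; congruence].
Qed.

Lemma in3_no4 T (X Y Z A B C D : T) :
  [set X; Y; Z] A -> [set X; Y; Z] B -> [set X; Y; Z] C -> [set X; Y; Z] D ->
  A <> B -> A <> C -> A <> D -> B <> C -> B <> D -> C <> D -> False.
Proof. by move=> [[->|->]|->] [[->|->]|->] [[->|->]|->] [[->|->]|->]; congruence. Qed.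

Lemma in2_no3 T (X Y A B C : T) :
  [set X; Y] A -> [set X; Y] B -> [set X; Y] C -> A <> B -> A <> C -> B <> C -> False.
Proof. by move=> [->|->] [->|->] [->|->]; congruence. Qed.

Lemma SIg_sub T (G : set T) P S S' : S `<=` S' -> SIg G P S' -> SIg G P S.
Proof.
move=> s [h1 [h2 h3]]; split; first by move=> x /s /h1.
split; first by move=> A B C D /s SA /s SB /s SC /s SD; apply: h2.
by move=> A B C /s SA /s SB /s SC; apply: h3.
Qed.

Lemma SIg3 T (G : set T) P X Y Z : G X -> G Y -> G Z -> ncol P X Y Z -> SIg G P [set X; Y; Z].
Proof.
move=> GX GY GZ nc; split; first by move=> x [[->|->]|->].
split; first by move=> A B C D hA hB hC hD; apply: (in3_no4 hA hB hC hD).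
move=> A B C hA hB hC ab ac bc [B0 [PB [bA [bB bC]]]].
have cov := in3_cover hA hB hC ab ac bc.
case: nc => _ [_ [_ nc]]; apply: nc; exists B0; split=> //.
have hX : B0 X by case: (cov X) => [|->|[->|->]] //; left; left.
have hY : B0 Y by case: (cov Y) => [|->|[->|->]] //; left; right.
have hZ : B0 Z by case: (cov Z) => [|->|[->|->]] //; right.
by [].
Qed.

Lemma SIg2 T (G : set T) P X Y : G X -> G Y -> SIg G P [set X; Y].
Proof.
move=> GX GY; split; first by move=> x [->|->].
split; first by move=> A B C D hA hB hC hD ab ac ad bc bd cd; exact: (in2_no3 hA hB hC ab ac bc).
by move=> A B C hA hB hC ab ac bc; exfalso; exact: (in2_no3 hA hB hC ab ac bc).
Qed.

Lemma R3 T (G : set T) P S : S `<=` G ->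
  rank_ge (SIg G P) S 3 <-> exists X Y Z, S X /\ S Y /\ S Z /\ ncol P X Y Z.
Proof.
move=> SG; split.
  case/rg3_ex => a [b [c [ab [ac [bc [Sa [Sb [Sc [_ [_ h3]]]]]]]]]].
  exists a, b, c; split=> //; split=> //; split=> //.
  split=> //; split=> //; split=> //.
  by apply: h3 => //; [left;left|left;right|right].
case=> X [Y [Z [SX [SY [SZ nc]]]]]; have [d1 [d2 [d3 _]]] := nc.
by apply: (rg3_of d1 d2 d3 SX SY SZ); apply: SIg3 => //; apply: SG.
Qed.

Lemma R2 T (G : set T) P S : S `<=` G ->
  rank_ge (SIg G P) S 2 <-> exists X Y, S X /\ S Y /\ X <> Y.
Proof.
move=> SG; split.
  by case/rg2_ex => a [b [ab [Sa [Sb _]]]]; exists a, b.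
case=> X [Y [SX [SY d]]]; apply: (rg2_of d SX SY).
by apply: SIg2; apply: SG.
Qed.

Lemma R4 T (G : set T) P S : ~ rank_ge (SIg G P) S 4.
Proof.
case/rg4_ex => f [fi [_ [_ [_ [_ [_ [h2 _]]]]]]].
have [n01 [n02 [n03 [n12 [n13 n23]]]]] := o4_neq.
by apply: (h2 (f o4_0) (f o4_1) (f o4_2) (f o4_3)); try (by eexists); move/fi.
Qed.

Lemma rg_le T (Ind : set T -> Prop) A k j : (forall S S', S `<=` S' -> Ind S' -> Ind S) ->
  (j <= k)%N -> rank_ge Ind A k -> rank_ge Ind A j.
Proof.
move=> dc jk [f [fi [fA fI]]]; exists (fun i => f (widen_ord jk i)); split.
  by move=> i i' /fi /(congr1 val) /= e; apply: val_inj.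
split; first by move=> x [i _ <-]; apply: fA; eexists.
by apply: dc fI => x [i _ <-]; eexists.
Qed.

Lemma ex_ncol T (G : set T) P : two_partition G P ->
  exists X Y Z, G X /\ G Y /\ G Z /\ ncol P X Y Z.
Proof.
move=> tp; have [_ [[B1 [B2 [P1 [P2 d12]]]] [h3 _]]] := tp.
case: (h3 _ P1) => X [Y [BX [BY dXY]]].
case: (h3 _ P2) => U [V [BU [BV dUV]]].
have GX := tp_sub tp P1 BX; have GY := tp_sub tp P1 BY.
have GU := tp_sub tp P2 BU; have GV := tp_sub tp P2 BV.
case: (EMp (B1 U)) => hU; last first.
  by exists X, Y, U; do 3?split=> //; apply: ncol_out tp P1 BX BY dXY hU.
case: (EMp (B1 V)) => hV; last first.
  by exists X, Y, V; do 3?split=> //; apply: ncol_out tp P1 BX BY dXY hV.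
by exfalso; apply: d12; apply: uniq_block tp P1 P2 hU hV BU BV dUV.
Qed.

Lemma hyp_eq T (G : set T) P : two_partition G P -> hyperplanes (SIg G P) G = P.
Proof.
move=> tp.
have dc : forall S S', S `<=` S' -> SIg G P S' -> SIg G P S by move=> *; apply: SIg_sub; eauto.
have hr3 : has_rank (SIg G P) G 3.
  split; last exact: R4.
  by apply/R3 => //; case: (ex_ncol tp) => X [Y [Z [? [? [? ?]]]]]; exists X, Y, Z.
have r3 : forall r, has_rank (SIg G P) G r -> r = 3.
  move=> r [hr nr]; case: (ltngtP r 3) => // h.
    by exfalso; apply: nr; apply: rg_le hr3.1.
  by exfalso; apply: (@R4 _ G P G); apply: rg_le hr.
have inB : forall S B X Y, S `<=` G -> ~ rank_ge (SIg G P) S 3 -> P B -> B X -> B Y -> X <> Y ->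
    S X -> S Y -> S `<=` B.
  move=> S B X Y SG nr PB BX BY dXY SX SY Z SZ.
  case: (EMp (Z = X)) => [->|zx] //; case: (EMp (Z = Y)) => [->|zy] //.
  case: (EMp (colB P X Y Z)) => [[B' [PB' [b1 [b2 b3]]]]|nc].
    by rewrite (uniq_block tp PB PB' BX BY b1 b2 dXY).
  exfalso; apply: nr; apply/R3 => //; exists X, Y, Z; do 3?split=> //.
  by apply: ncol_of_notcol tp (SG _ SX) (SG _ SY) dXY nc.
have Brank : forall B, P B -> has_rank (SIg G P) B 2.
  move=> B PB; have BG : B `<=` G by move=> x; apply: tp_sub tp PB.
  split.
    by apply/R2 => //; have [_ [_ [h3 _]]] := tp; case: (h3 _ PB) => X [Y [? [? ?]]]; exists X, Y.
  move/R3 => /(_ BG) [X [Y [Z [BX [BY [BZ [_ [_ [_ nc]]]]]]]]]; apply: nc.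
  by exists B.
apply/seteqP; split=> H.
  case=> r [hr [HG [[h2 nh3] mx]]]; rewrite (r3 _ hr) /= in h2 nh3 mx.
  case/R2: h2 => // X [Y [HX [HY dXY]]].
  have [B [PB [BX BY]]] := block_ex tp (HG _ HX) (HG _ HY) dXY.
  have HB := inB _ _ _ _ HG nh3 PB BX BY dXY HX HY.
  rewrite -(mx B HB) //; first by move=> x; apply: tp_sub tp PB.
  exact: Brank.
move=> PH; have HG : H `<=` G by move=> x; apply: tp_sub tp PH.
exists 3; split=> //; split=> //; split; first exact: Brank.
move=> H' BH' H'G [h2 nh3].
have [_ [_ [h3 _]]] := tp; case: (h3 _ PH) => X [Y [HX [HY dXY]]].
apply/seteqP; split=> //.
exact: inB _ _ _ _ H'G nh3 PH HX HY dXY (BH' _ HX) (BH' _ HY).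
Qed.

Import GRing.Theory.
Local Open Scope ring_scope.
Local Open Scope classical_set_scope.


Lemma subl0 n (L : set (Zn n)) : is_sublattice L -> L 0.
Proof. by case. Qed.
Lemma sublN n (L : set (Zn n)) a : is_sublattice L -> L a -> L (- a).
Proof. by case=> h0 hB La; rewrite -sub0r; apply: hB. Qed.
Lemma sublB n (L : set (Zn n)) a b : is_sublattice L -> L a -> L b -> L (a - b).
Proof. by case=> h0 hB; apply: hB. Qed.
Lemma sublD n (L : set (Zn n)) a b : is_sublattice L -> L a -> L b -> L (a + b).
Proof. by move=> sL La Lb; rewrite -[b]opprK; apply: sublB => //; apply: sublN. Qed.
Lemma sublC n (L : set (Zn n)) a b : is_sublattice L -> L (a - b) -> L (b - a).
Proof. by move=> sL h; rewrite -opprB; apply: sublN. Qed.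

Lemma coset_eq n (L : set (Zn n)) a b : is_sublattice L ->
  (coset L a = coset L b <-> L (a - b)).
Proof.
move=> sL; split.
  move=> e; have : coset L b b by rewrite /coset /= subrr; apply: subl0.
  by rewrite -e /coset /= => h; apply: sublC.
move=> h; apply/seteqP; split=> c /=; rewrite /coset /=.
  by move=> hc; have := sublD sL hc h; rewrite addrA subrK.
by move=> hc; have := sublB sL hc h; rewrite opprB addrA subrK.
Qed.

Lemma coset_refl n (L : set (Zn n)) a : is_sublattice L -> coset L a a.
Proof. by move=> sL; rewrite /coset /= subrr; apply: subl0. Qed.

Lemma transl_coset n (L : set (Zn n)) u a : transl u (coset L a) = coset L (a + u).
Proof. by apply/seteqP; split=> b; rewrite /transl /coset /= opprD addrA addrAC. Qed.

Lemma quot_coset n (L : set (Zn n)) a : quotient L (coset L a).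
Proof. by exists a. Qed.

Lemma fset_ext n (f g : Bpoly n) : (forall x, x \in f <-> x \in g) -> f = g.
Proof. by move=> h; apply/fsetP => x; apply/idP/idP => /h. Qed.

Lemma in_f2 n (a b x : Zn n) : x \in [fset a; b]%fset <-> x = a \/ x = b.
Proof. by rewrite in_fset2; split; [case/orP=> /eqP; tauto|case=> ->; rewrite eqxx ?orbT]. Qed.

Lemma in_f1 n (a x : Zn n) : x \in [fset a]%fset <-> x = a.
Proof. by rewrite in_fset1; split=> [/eqP|->]. Qed.

Lemma in_f3 n (a b c x : Zn n) : x \in [fset a; b; c]%fset <-> x = a \/ x = b \/ x = c.
Proof.
rewrite !in_fsetU !in_fset1; split.
  by case/orP=> [/orP[]|] /eqP; tauto.
by case=> [->|[->|->]]; rewrite eqxx ?orbT.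
Qed.

Lemma in_f4 n (a b c d x : Zn n) : x \in [fset a; b; c; d]%fset <-> x = a \/ x = b \/ x = c \/ x = d.
Proof.
rewrite !in_fsetU !in_fset1; split.
  by case/orP=> [/orP[/orP[]|]|] /eqP; tauto.
by case=> [->|[->|[->|->]]]; rewrite eqxx ?orbT.
Qed.

Lemma in_Bmul n (f g : Bpoly n) x :
  x \in Bmul g f <-> exists a b, a \in g /\ b \in f /\ x = a + b.
Proof.
rewrite /Bmul; split.
  by case/imfset2P=> a ag [b bf ->]; exists a, b.
by case=> a [b [ag [bf ->]]]; apply/imfset2P; exists a => //; exists b.
Qed.

Lemma in_Badd n (f g : Bpoly n) x : x \in Badd f g <-> x \in f \/ x \in g.
Proof. by rewrite /Badd in_fsetU; split=> [/orP|[]->]; rewrite ?orbT. Qed.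

Lemma in_shift n (f : Bpoly n) w x : x \in Bmul [fset w]%fset f <-> x - w \in f.
Proof.
rewrite in_Bmul; split.
  by case=> a [b [/in_f1 -> [bf ->]]]; rewrite addrAC subrr add0r.
by move=> h; exists w, (x - w); rewrite in_fset1 eqxx; split=> //; split=> //; rewrite addrC subrK.
Qed.

Definition IndLP n (L : set (Zn n)) (P : set (set (set (Zn n)))) (A : set (Zn n)) : Prop :=
  (forall a b, A a -> A b -> a <> b -> ~ L (a - b)) /\
  (forall a b c d, A a -> A b -> A c -> A d -> a <> b -> a <> c -> a <> d ->
     b <> c -> b <> d -> c <> d -> False) /\
  (forall a b c, A a -> A b -> A c -> a <> b -> a <> c -> b <> c ->
     ~ colB P (coset L a) (coset L b) (coset L c)).

Definition clE n (L : set (Zn n)) P (A : set (Zn n)) (x : Zn n) : Prop :=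
  clK P (coset L @` A) (coset L x).

Definition ILP n (L : set (Zn n)) P : set (Bpoly n) :=
  [set f | forall x, x \in f -> clE L P (Bsupp f `\ x) x].

Lemma IndLP_sub n (L : set (Zn n)) P A B : A `<=` B -> IndLP L P B -> IndLP L P A.
Proof.
move=> s [h1 [h2 h3]]; split; first by move=> a b Aa Ab; apply: h1; apply: s.
split; first by move=> a b c d Aa Ab Ac Ad; apply: h2; apply: s.
by move=> a b c Aa Ab Ac; apply: h3; apply: s.
Qed.

Lemma Ind_coset n (L : set (Zn n)) P A a b : is_sublattice L -> IndLP L P A ->
  A a -> A b -> a <> b -> coset L a <> coset L b.
Proof. by move=> sL [h1 _] Aa Ab d /(coset_eq _ _ sL); apply: h1. Qed.

Lemma coset_neq n (L : set (Zn n)) a b : coset L a <> coset L b -> a <> b.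
Proof. by move=> h e; apply: h; rewrite e. Qed.

Lemma notcl_of_Ind n (L : set (Zn n)) P A x : is_sublattice L -> IndLP L P A -> A x ->
  ~ clE L P (A `\ x) x.
Proof.
move=> sL IA Ax; have [h1 [h2 h3]] := IA.
case=> [[a [Aa ax] e]|[H|H]].
- by move/(coset_eq _ _ sL): e; apply: h1.
- case: H => X [Y [[a [Aa ax] ea] [[b [Bb bx] eb] [d c]]]].
  subst X Y; apply: (h3 a b x) => //; exact: coset_neq d.
- case: H => X [Y [W [[a [Aa ax] ea] [[b [Bb bx] eb] [[c [Cc cx] ec] [d1 [d2 [d3 _]]]]]]]].
  by subst X Y W; apply: (h2 a b c x) => //; apply: coset_neq; eassumption.
Qed.

Lemma indep_add n (L : set (Zn n)) P B x : is_sublattice L -> IndLP L P B -> ~ B x ->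
  ~ IndLP L P (B `|` [set x]) -> clE L P B x.
Proof.
move=> sL IB nBx nI; apply: contrapT => ncl; apply: nI.
have [h1 [h2 h3]] := IB.
have i1 : forall b, B b -> coset L x <> coset L b.
  by move=> b Bb e; apply: ncl; left; exists b.
have K2 : forall b c, B b -> B c -> b <> c -> ~ colB P (coset L b) (coset L c) (coset L x).
  move=> b c Bb Bc d cl; apply: ncl; right; left; exists (coset L b), (coset L c).
  split; first by exists b. split; first by exists c.
  by split=> //; exact: Ind_coset IB Bb Bc d.
have K3 : forall b c d, B b -> B c -> B d -> b <> c -> b <> d -> c <> d -> False.
  move=> b c d Bb Bc Bd dbc dbd dcd; apply: ncl; right; right.
  exists (coset L b), (coset L c), (coset L d).
  split; first by exists b. split; first by exists c. split; first by exists d.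
  split; first exact: Ind_coset IB Bb Bc dbc.
  split; first exact: Ind_coset IB Bb Bd dbd.
  split; first exact: Ind_coset IB Bc Bd dcd.
  exact: h3.
split.
  move=> a b [Ba|ea] [Bb|eb] dab; [exact: h1| | |by rewrite ea eb in dab].
  - rewrite eb => /(coset_eq _ _ sL) e; exact: (i1 a Ba (esym e)).
  - rewrite ea => /(coset_eq _ _ sL) e; exact: (i1 b Bb e).
split.
  move=> a b c d [Ba|ea] [Bb|eb] [Bc|ec] [Bd|ed] dab dac dad dbc dbd dcd;
    rewrite ?ea ?eb ?ec ?ed in dab dac dad dbc dbd dcd; try congruence.
  - exact: h2 Ba Bb Bc Bd dab dac dad dbc dbd dcd.
  - exact: K3 Ba Bb Bc dab dac dbc.
  - exact: K3 Ba Bb Bd dab dad dbd.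
  - exact: K3 Ba Bc Bd dac dad dcd.
  - exact: K3 Bb Bc Bd dbc dbd dcd.
move=> a b c [Ba|ea] [Bb|eb] [Bc|ec] dab dac dbc;
  rewrite ?ea ?eb ?ec in dab dac dbc |- *; try congruence.
- exact: h3 Ba Bb Bc dab dac dbc.
- exact: K2 Ba Bb dab.
- by move=> h; apply: (K2 _ _ Ba Bc dac); exact: colB_perm2 h.
- by move=> h; apply: (K2 _ _ Bb Bc dbc); exact: colB_perm2 (colB_perm1 h).
Qed.

Lemma in_fsetPr n (F : Bpoly n) (D : set (Zn n)) x :
  x \in [fset y in F | `[< D y >]]%fset <-> x \in F /\ D x.
Proof. by rewrite !inE; split=> [/andP[-> /asboolP]|[-> /asboolP ->]]. Qed.

Lemma min_circ n (Ind : set (Zn n) -> Prop) :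
  (forall A B, A `<=` B -> Ind B -> Ind A) -> Ind set0 -> forall F : Bpoly n, ~ Ind (Bsupp F) ->
  exists C : Bpoly n, (forall x, x \in C -> x \in F) /\ ~ Ind (Bsupp C) /\
     (forall D, D `<` Bsupp C -> Ind D).
Proof.
move=> dc I0 F; move: {2}#|`F|%fset (leqnn #|`F|%fset) => k.
elim: k F => [|k IH] F hk nI.
  exfalso; apply: nI; apply: (dc _ set0) => //.
  by move=> x; rewrite /Bsupp /=; move: hk; rewrite leqn0 cardfs_eq0 => /eqP ->.
case: (EMp (forall D, D `<` Bsupp F -> Ind D)) => hall.
  by exists F; split=> //; split.
move/existsNP: hall => [D /not_implyP [[DF FD] nID]].
set F' := [fset y in F | `[< D y >]]%fset.
have eF : Bsupp F' = D.
  apply/seteqP; split=> y; rewrite /Bsupp /= in_fsetPr; first by case.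
  by move=> Dy; split=> //; apply: DF.
have lt : (#|`F'| < #|`F|)%N.
  apply: fproper_ltn_card; rewrite fproperE; apply/andP; split.
    by apply/fsubsetP => y /in_fsetPr [].
  apply/negP => /fsubsetP s; apply: FD => y Fy; rewrite -eF; exact: s.
case: (IH F' _ _) => [||C [CF' rest]].
- by rewrite -ltnS; apply: leq_trans lt hk.
- by rewrite eF.
by exists C; split=> // x /CF' /in_fsetPr [].
Qed.

Lemma IndLP0 n (L : set (Zn n)) P : IndLP L P set0.
Proof. by split; [|split] => a. Qed.

Lemma fin_Ind n (L : set (Zn n)) P A :
  (forall F : Bpoly n, Bsupp F `<=` A -> IndLP L P (Bsupp F)) -> IndLP L P A.
Proof.
move=> h; split.
  move=> a b Aa Ab.
  have : Bsupp [fset a; b]%fset `<=` A by move=> x /in_f2 [] ->.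
  move=> /h [h1' _]; apply: h1'; apply/in_f2; tauto.
split.
  move=> a b c d Aa Ab Ac Ad.
  have : Bsupp [fset a; b; c; d]%fset `<=` A by move=> x /in_f4 [->|[->|[]->]].
  move=> /h [_ [h2 _]]; apply: h2; apply/in_f4; tauto.
move=> a b c Aa Ab Ac.
have : Bsupp [fset a; b; c]%fset `<=` A by move=> x /in_f3 [->|[]->].
move=> /h [_ [_ h3]]; apply: h3; apply/in_f3; tauto.
Qed.

Lemma clE_mono n (L : set (Zn n)) P A B x : A `<=` B -> clE L P A x -> clE L P B x.
Proof. by move=> s; apply: clK_mono; apply: image_subset. Qed.

Lemma ILP_indep n (L : set (Zn n)) P A : is_sublattice L ->
  indepM (ILP L P) A <-> IndLP L P A.
Proof.
move=> sL; split; last first.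
  move=> IA f If nf sf; case/fset0Pn: nf => x xf.
  apply: (notcl_of_Ind sL IA (sf _ xf)).
  apply: clE_mono (If x xf) => y [fy yx]; split=> //; exact: sf.
move=> iA; apply: fin_Ind => F sF; apply: contrapT => nI.
have dc : forall A B, A `<=` B -> IndLP L P B -> IndLP L P A by move=> *; apply: IndLP_sub; eauto.
case: (min_circ dc (IndLP0 L P) nI) => C [CF [nIC minC]].
apply: (iA C).
- move=> x xC; apply: indep_add => //.
  + apply: minC; split; first by move=> y [].
    by move=> h; case: (h x xC) => _; apply.
  + by case=> _; apply.
  + suff -> : (Bsupp C `\ x) `|` [set x] = Bsupp C by [].
    apply/seteqP; split=> y; first by case=> [[]|->].
    by move=> yC; case: (EMp (y = x)) => [->|yx]; [right|left].
- apply/negP => /eqP C0; apply: nIC; rewrite C0; apply: (dc _ set0); last exact: IndLP0.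
  by move=> y; rewrite /Bsupp /= in_fset0.
- by move=> y /CF; apply: sF.
Qed.

Lemma clK_img T (P : set (set T)) (tau : T -> T) K Z : injective tau ->
  (forall B, P B -> P (tau @` B)) -> (forall B', P B' -> exists2 B, P B & B' = tau @` B) ->
  clK P K Z -> clK P (tau @` K) (tau Z).
Proof.
move=> it h1 h2 [KZ|[[X [Y [KX [KY [d [B [PB [BX [BY BZ]]]]]]]]]|[X [Y [W [KX [KY [KW [d1 [d2 [d3 nc]]]]]]]]]]].
- by left; exists Z.
- right; left; exists (tau X), (tau Y); split; first by exists X.
  split; first by exists Y. split; first by move/it.
  by exists (tau @` B); split; [exact: h1|split; [exists X|split; [exists Y|exists Z]]].
- right; right; exists (tau X), (tau Y), (tau W).
  split; first by exists X. split; first by exists Y. split; first by exists W.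
  split; first by move/it. split; first by move/it. split; first by move/it.
  case=> B' [PB' [b1 [b2 b3]]]; case: (h2 _ PB') => B0 PB0 e; subst B'.
  case: b1 => x1 B1 /it e1; case: b2 => x2 B2 /it e2; case: b3 => x3 B3 /it e3.
  by subst; apply: nc; exists B0.
Qed.

Lemma transl_inj n (u : Zn n) : injective (transl u).
Proof.
move=> A B e; apply/seteqP; split=> x h.
  have : transl u B (x + u) by rewrite -e /transl /= addrK.
  by rewrite /transl /= addrK.
have : transl u A (x + u) by rewrite e /transl /= addrK.
by rewrite /transl /= addrK.
Qed.

Lemma inv_img1 n (P : set (set (set (Zn n)))) u B : invariant_collection P -> P B ->
  P (transl u @` B).
Proof. by move=> iP PB; rewrite -(iP u); exists B. Qed.

Lemma inv_img2 n (P : set (set (set (Zn n)))) u B' : invariant_collection P -> P B' ->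
  exists2 B, P B & B' = transl u @` B.
Proof. move=> iP PB'; have : ((fun B => transl u @` B) @` P) B' by rewrite (iP u).
by case=> B PB <-; exists B. Qed.

Lemma clE_shift n (L : set (Zn n)) P A b a : invariant_collection P ->
  clE L P A b -> clE L P ((fun y => y + a) @` A) (b + a).
Proof.
move=> iP h; rewrite /clE -(transl_coset L a b).
have -> : coset L @` ((fun y => y + a) @` A) = transl a @` (coset L @` A).
  apply/seteqP; split=> X.
    by case=> y [z Az <-] <-; exists (coset L z); [exists z|rewrite transl_coset].
  by case=> Y [z Az <-] <-; exists (z + a); [exists z|rewrite transl_coset].
apply: clK_img h; first exact: transl_inj.
  by move=> B; apply: inv_img1.
by move=> B; apply: inv_img2.
Qed.

Lemma C2E n (L : set (Zn n)) P A u y : two_partition (quotient L) P ->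
  clE L P A u -> clE L P (A `|` [set u]) y -> clE L P A y.
Proof.
move=> tp cu; rewrite /clE image_setU image_set1 => cy.
apply: C2 tp _ cu cy; by move=> X [a _ <-]; apply: quot_coset.
Qed.

Lemma C3E n (L : set (Zn n)) P A z y :
  clE L P (A `|` [set z]) y -> ~ clE L P A y -> clE L P (A `|` [set y]) z.
Proof. by rewrite /clE !image_setU !image_set1; apply: C3. Qed.

Lemma ILP_ideal n (L : set (Zn n)) P : invariant_collection P -> is_ideal (ILP L P).
Proof.
move=> iP; split; first by move=> x; rewrite in_fset0.
split.
  move=> f g If Ig x /in_Badd [xf|xg].
    by apply: clE_mono (If x xf) => y [yf yx]; split=> //; apply/in_Badd; left.
  by apply: clE_mono (Ig x xg) => y [yf yx]; split=> //; apply/in_Badd; right.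
move=> f g If x /in_Bmul [a [b [ag [bf ->]]]].
rewrite addrC; apply: clE_mono (clE_shift a iP (If b bf)).
move=> _ [y [yf yb] <-]; split.
  by apply/in_Bmul; exists a, y; split=> //; split=> //; rewrite addrC.
by move/addIr.
Qed.

Lemma coloop_rm n (L : set (Zn n)) P (S : set (Zn n)) y (s : seq (Zn n)) :
  S y -> clE L P (S `\ y) y -> (forall z, z \in s -> S z /\ ~ clE L P (S `\ z) z) ->
  clE L P ((S `\` [set w | w \in s]) `\ y) y.
Proof.
move=> Sy cy; elim: s => [|z s IH] hs.
  by apply: clE_mono cy => w [Sw wy]; split=> //; split.
have [Sz nz] := hs z (mem_head z s).
have IH' := IH (fun w ws => hs w (@mem_behead _ (z :: s) w ws)).
have yz : y <> z by move=> e; subst z.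
set T := S `\` [set w | w \in s] in IH'.
have : clE L P (((T `\ z) `\ y) `|` [set z]) y.
  apply: clE_mono IH' => w [[Sw ws] wy].
  by case: (EMp (w = z)) => [->|wz]; [right|left; split=> //; split].
move=> c; case: (EMp (clE L P ((T `\ z) `\ y) y)) => h.
  apply: clE_mono h => w [[[Sw ws] wz] wy]; split=> //; split=> //.
  by rewrite /= in_cons => /orP [/eqP|] //.
exfalso; apply: nz; apply: clE_mono (C3E c h) => w [[[[Sw _] wz] _]|->].
  by split.
by split=> // e; apply: yz.
Qed.

Lemma ILP_elim n (L : set (Zn n)) P : two_partition (quotient L) P ->
  forall f g u, ILP L P f -> ILP L P g -> Bsupp f u -> Bsupp g u ->
    exists h, ILP L P h /\
      ((Bsupp f `\` Bsupp g) `|` (Bsupp g `\` Bsupp f)) `<=` Bsupp h /\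
      Bsupp h `<=` ((Bsupp f `|` Bsupp g) `\ u).
Proof.
move=> tp f g u If Ig uf ug.
set S := (Bsupp f `|` Bsupp g) `\ u.
set h := [fset y in (f `|` g)%fset | `[< y <> u /\ clE L P (S `\ y) y >]]%fset.
have hE : forall y, y \in h <-> S y /\ clE L P (S `\ y) y.
  move=> y; rewrite in_fsetPr; split.
    case=> yfg [yu cy]; split=> //; rewrite /S /=; split=> //.
    by case/fsetUP: yfg; [left|right].
  rewrite /S /=; case=> [[yfg yu] cy]; split=> //; apply/fsetUP.
  by case: yfg; [left|right].
have key : forall x, Bsupp f x -> ~ Bsupp g x -> Bsupp h x.
  move=> x xf xg; have xu : x <> u by move=> e; apply: xg; rewrite e.
  apply/hE; split; first by split=> //; left.
  have cu : clE L P (S `\ x) u.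
    apply: clE_mono (Ig u ug) => w [wg wu]; split; first by split=> //; right.
    by move=> e; apply: xg; rewrite -e.
  apply: (C2E tp cu); apply: clE_mono (If x xf) => w [wf wx].
  case: (EMp (w = u)) => [->|wu]; [by right|left].
  by split=> //; split=> //; left.
have key' : forall x, Bsupp g x -> ~ Bsupp f x -> Bsupp h x.
  move=> x xg xf; have xu : x <> u by move=> e; apply: xf; rewrite e.
  apply/hE; split; first by split=> //; right.
  have cu : clE L P (S `\ x) u.
    apply: clE_mono (If u uf) => w [wf wu]; split; first by split=> //; left.
    by move=> e; apply: xf; rewrite -e.
  apply: (C2E tp cu); apply: clE_mono (Ig x xg) => w [wg wx].
  case: (EMp (w = u)) => [->|wu]; [by right|left].
  by split=> //; split=> //; right.
exists h; split; last first.
  split; first by move=> x [[xf xg]|[xg xf]]; [apply: key|apply: key'].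
  by move=> x /hE [].
move=> y /hE [Sy cy].
set Dc := [fset z in (f `|` g)%fset | `[< z <> u /\ ~ clE L P (S `\ z) z >]]%fset.
have hD : forall z, z \in Dc -> S z /\ ~ clE L P (S `\ z) z.
  move=> z /in_fsetPr [zfg [zu nz]]; split=> //; rewrite /S /=; split=> //.
  by case/fsetUP: zfg; [left|right].
apply: clE_mono (coloop_rm Sy cy hD) => w [[Sw wD] wy]; split=> //.
apply/hE; split=> //; apply: contrapT => nw; apply: wD; apply/in_fsetPr; split.
  by case: Sw => [[wf|wg] _]; apply/fsetUP; [left|right].
by case: Sw => _ wu; split.
Qed.

Lemma IndLP_le1 n (L : set (Zn n)) P D : (forall x y, D x -> D y -> x = y) -> IndLP L P D.
Proof.
move=> h; split; first by move=> a b Da Db /(_ (h _ _ Da Db)).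
split; first by move=> a b c d Da Db _ _ /(_ (h _ _ Da Db)).
by move=> a b c Da Db _ /(_ (h _ _ Da Db)).
Qed.

Lemma Ind2 n (L : set (Zn n)) P a b : is_sublattice L ->
  IndLP L P [set a; b] <-> (a <> b -> ~ L (a - b)).
Proof.
move=> sL; split; first by case=> h1 _ ab; apply: h1 => //; [left|right].
move=> h; split.
  move=> x y [->|->] [->|->] xy; try (by case: xy); first exact: h.
  by move/(sublC sL); apply: h => e; apply: xy; rewrite e.
split; first by move=> x y z w hx hy hz _ xy xz _ yz; exfalso; exact: (in2_no3 hx hy hz xy xz yz).
by move=> x y z hx hy hz xy xz yz; exfalso; exact: (in2_no3 hx hy hz xy xz yz).
Qed.

Lemma circ_iff n (I : set (Bpoly n)) (L : set (Zn n)) P C :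
  (forall A, indepM I A <-> IndLP L P A) ->
  circM I C <-> ~ IndLP L P C /\ forall D, D `<` C -> IndLP L P D.
Proof.
move=> HI; rewrite /circM; split.
  by case=> h1 h2; split; [move/HI|move=> D /h2 /HI].
by case=> h1 h2; split; [move/HI|move=> D /h2 /HI].
Qed.

Lemma pclass_eq n (I : set (Bpoly n)) (L : set (Zn n)) P : is_sublattice L ->
  (forall A, indepM I A <-> IndLP L P A) -> pclass I = coset L.
Proof.
move=> sL HI; apply: funext => a; apply/seteqP; split=> b; rewrite /pclass /parallel /coset /=.
  case=> [<-|/(circ_iff _ HI) [nI _]]; first by rewrite subrr; apply: subl0.
  apply: sublC => //; apply: contrapT => nL; apply: nI; apply/Ind2 => //.
move=> Lba; case: (EMp (a = b)) => [->|ab]; [by left|right].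
apply/(circ_iff _ HI); split.
  by move/Ind2 => /(_ sL) /(_ ab); apply; apply: sublC.
move=> D [DS SD]; apply: IndLP_le1 => x y Dx Dy; apply: contrapT => xy.
apply: SD => z [->|->].
  by case: (DS _ Dx) => ex; case: (DS _ Dy) => ey; subst; congruence.
by case: (DS _ Dx) => ex; case: (DS _ Dy) => ey; subst; congruence.
Qed.

Lemma notSI n (I : set (Bpoly n)) (L : set (Zn n)) P S (F : Bpoly n) : is_sublattice L ->
  (forall A, indepM I A <-> IndLP L P A) ->
  (forall a, a \in F -> S (coset L a)) ->
  (forall a b, a \in F -> b \in F -> coset L a = coset L b -> a = b) ->
  ~ IndLP L P (Bsupp F) -> ~ indep_of_circuits (si_circuits I) S.
Proof.
move=> sL HI hS hd nI ioc.
have dc : forall A B, A `<=` B -> IndLP L P B -> IndLP L P A by move=> *; apply: IndLP_sub; eauto.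
case: (min_circ dc (IndLP0 L P) nI) => C [CF [nIC minC]].
have hpc := pclass_eq sL HI.
apply: (ioc (pclass I @` Bsupp C)).
  exists (Bsupp C); split; first by apply/(circ_iff _ HI).
  split=> //; rewrite hpc => a b aC bC; apply: hd; exact: CF.
by move=> X [a aC <-]; rewrite hpc; apply: hS; apply: CF.
Qed.

Lemma SI_eq n (I : set (Bpoly n)) (L : set (Zn n)) P : is_sublattice L ->
  (forall A, indepM I A <-> IndLP L P A) ->
  (fun A => A `<=` si_ground I /\ indep_of_circuits (si_circuits I) A) = SIg (quotient L) P.
Proof.
move=> sL HI; have hpc := pclass_eq sL HI.
have hg : si_ground I = quotient L by rewrite /si_ground hpc.
apply: funext => S; apply: propext; rewrite hg; split.
  case=> SQ ioc; split=> //; split.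
    move=> X1 X2 X3 X4 S1 S2 S3 S4 d12 d13 d14 d23 d24 d34.
    case: (SQ _ S1) => a1 _ e1; case: (SQ _ S2) => a2 _ e2.
    case: (SQ _ S3) => a3 _ e3; case: (SQ _ S4) => a4 _ e4; subst.
    apply: (notSI (F := [fset a1; a2; a3; a4]%fset) sL HI _ _ _ ioc).
    - by move=> a /in_f4 [->|[->|[->|->]]].
    - by move=> a b /in_f4 [->|[->|[->|->]]] /in_f4 [->|[->|[->|->]]]; congruence.
    - case=> _ [h2 _]; apply: (h2 a1 a2 a3 a4); try (by apply/in_f4; tauto);
      by move=> ?; congruence.
  move=> X1 X2 X3 S1 S2 S3 d12 d13 d23 cl.
  case: (SQ _ S1) => a1 _ e1; case: (SQ _ S2) => a2 _ e2; case: (SQ _ S3) => a3 _ e3; subst.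
  apply: (notSI (F := [fset a1; a2; a3]%fset) sL HI _ _ _ ioc).
  - by move=> a /in_f3 [->|[->|->]].
  - by move=> a b /in_f3 [->|[->|->]] /in_f3 [->|[->|->]]; congruence.
  - case=> _ [_ h3]; apply: (h3 a1 a2 a3); try (by apply/in_f3; tauto);
      try (by move=> ?; congruence).
    exact: cl.
case=> SQ [h2 h3]; split=> // D [C [cC [hd ->]]] DS.
move/(circ_iff _ HI): cC => [nIC _]; apply: nIC.
have hc : forall a, C a -> S (coset L a) by move=> a Ca; rewrite -hpc; apply: DS; exists a.
have hd' : forall a b, C a -> C b -> a <> b -> coset L a <> coset L b.
  by move=> a b Ca Cb ab e; apply: ab; apply: hd => //; rewrite hpc.
split.
  by move=> a b Ca Cb ab /(coset_eq _ _ sL); apply: hd' Ca Cb ab.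
split.
  move=> a b c d Ca Cb Cc Cd ab ac ad bc bd cd.
  by apply: (h2 _ _ _ _ (hc _ Ca) (hc _ Cb) (hc _ Cc) (hc _ Cd)); apply: hd'.
move=> a b c Ca Cb Cc ab ac bc.
by apply: (h3 _ _ _ (hc _ Ca) (hc _ Cb) (hc _ Cc)); apply: hd'.
Qed.

Lemma G_main n (I : set (Bpoly n)) (L : set (Zn n)) P : is_sublattice L ->
  two_partition (quotient L) P ->
  (forall A, indepM I A <-> IndLP L P A) -> si_hyperplanes I = P.
Proof.
move=> sL tp HI; rewrite /si_hyperplanes (SI_eq sL HI).
have -> : si_ground I = quotient L by rewrite /si_ground (pclass_eq sL HI).
exact: hyp_eq.
Qed.

Lemma clE_small n (L : set (Zn n)) P A x v : A `<=` [set v] -> clE L P A x ->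
  coset L x = coset L v.
Proof.
move=> Av [[y Ay <-]|[[X [Y [[a Aa <-] [[b Ab <-] [d _]]]]]|[X [Y [W [[a Aa <-] [[b Ab <-] [_ [d _]]]]]]]]].
- by rewrite (Av _ Ay).
- by exfalso; apply: d; rewrite (Av _ Aa) (Av _ Ab).
- by exfalso; apply: d; rewrite (Av _ Aa) (Av _ Ab).
Qed.

Lemma ILP_binom n (L : set (Zn n)) P : is_sublattice L -> binomial_lattice (ILP L P) = L.
Proof.
move=> sL; apply/seteqP; split=> w.
  case=> [->|[u [v [Iuv ->]]]]; first exact: subl0.
  have := Iuv u (proj2 (in_f2 _ _ _) (or_introl erefl)).
  move/clE_small => /(_ v) h.
  apply/(coset_eq _ _ sL); apply: h => y [/in_f2 [->|->] yu] //; exfalso; exact: yu.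
move=> Lw; case: (EMp (w = 0)) => [->|w0]; [by left|right].
exists w, 0; rewrite subr0; split=> //.
move=> x /in_f2 [->|->].
  left; exists 0; first by split; [apply/in_f2; right|move=> e; apply: w0].
  by apply/(coset_eq _ _ sL); rewrite sub0r; apply: sublN.
left; exists w; first by split; [apply/in_f2; left|].
by apply/(coset_eq _ _ sL); rewrite subr0.
Qed.

Lemma ILP_rank n (L : set (Zn n)) P : is_sublattice L -> two_partition (quotient L) P ->
  has_rank (IndLP L P) setT 3.
Proof.
move=> sL tp; split; last first.
  case/rg4_ex => f [fi [_ [_ [_ [_ [_ [h2 _]]]]]]].
  have [n01 [n02 [n03 [n12 [n13 n23]]]]] := o4_neq.
  by apply: (h2 (f o4_0) (f o4_1) (f o4_2) (f o4_3)); try (by eexists); move/fi.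
case: (ex_ncol tp) => X [Y [Z [[a _ ea] [[b _ eb] [[c _ ec] nc]]]]]; subst.
have [dab [dac [dbc ncl]]] := nc.
apply: (rg3_of (coset_neq dab) (coset_neq dac) (coset_neq dbc)) => //.
split.
  move=> x y hx hy xy /(coset_eq _ _ sL) e; apply: xy.
  by case: hx => [[ex|ex]|ex]; case: hy => [[ey|ey]|ey]; subst; congruence.
split; first by move=> x y z w hx hy hz hw; apply: (in3_no4 hx hy hz hw).
move=> x y z hx hy hz xy xz yz [B [PB [bx [by_ bz]]]]; apply: ncl; exists B; split=> //.
have cov := in3_cover hx hy hz xy xz yz.
have h : forall t, [set a; b; c] t -> B (coset L t).
  by move=> t /cov [->|[->|->]].
split; first by apply: h; left; left.
split; first by apply: h; left; right.
by apply: h; right.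
Qed.

Lemma surjLP n (LP : set (Zn n) * set (set (set (Zn n)))) : admissible_pair LP ->
  exists I : set (Bpoly n), zd3_tropical_ideal I /\ Phi I = LP.
Proof.
case: LP => L P [sL [tp iP]] /=.
have HI : forall A, indepM (ILP L P) A <-> IndLP L P A by move=> A; exact: ILP_indep.
exists (ILP L P); split.
  split; first by split; [exact: ILP_ideal|exact: ILP_elim].
  rewrite /zero_dim_of_degree.
  have -> : indepM (ILP L P) = IndLP L P by apply: funext => A; apply: propext.
  exact: ILP_rank.
by rewrite /Phi ILP_binom // (G_main sL tp HI).
Qed.

Lemma zid1 (V : zmodType) (u v u' v' : V) : u - (u' + (v - v')) = (u - v) - (u' - v').
Proof.
rewrite opprD addrA !opprB addrACA [X in _ = X]addrACA; congr (_ + _); exact: addrC.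
Qed.
Lemma zid2 (V : zmodType) (a b u v : V) : a - b = u - v -> v + (a - u) = b.
Proof.
move/eqP; rewrite subr_eq => /eqP ->.
by rewrite addrAC [u - v - u]addrAC subrr add0r addNKr.
Qed.
Lemma zid3 (V : zmodType) (x a u : V) : x - (a - u) = u <-> x = a.
Proof.
split; last by move=> ->; rewrite opprB addrC subrK.
by move/eqP; rewrite subr_eq addrC subrK => /eqP.
Qed.

Lemma ord4 (i : 'I_4) : i = o4_0 \/ i = o4_1 \/ i = o4_2 \/ i = o4_3.
Proof.
case: i => [[|[|[|[|m]]]] Hi]; [left|right;left|right;right;left|right;right;right|by []];
  by apply: val_inj.
Qed.

Definition mk4 T (a b c d : T) (i : 'I_4) : T := nth a [:: a; b; c; d] i.

Lemma mk4_range T (a b c d : T) : range (mk4 a b c d) = [set a; b; c; d].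
Proof.
apply/seteqP; split=> x.
  case=> i _ <-; case: (ord4 i) => [->|[->|[->|->]]]; rewrite /mk4 /=;
  [left;left;left|left;left;right|left;right|right] => //.
by case=> [[[->|->]|->]|->]; [exists o4_0|exists o4_1|exists o4_2|exists o4_3].
Qed.

Lemma mk4_inj T (a b c d : T) : a <> b -> a <> c -> a <> d -> b <> c -> b <> d -> c <> d ->
  injective (mk4 a b c d).
Proof.
move=> ab ac ad bc bd cd i j.
by case: (ord4 i) => [->|[->|[->|->]]]; case: (ord4 j) => [->|[->|[->|->]]];
  rewrite /mk4 /=; congruence.
Qed.


Lemma I_shift n (I : set (Bpoly n)) f w : is_tropical_ideal I -> I f -> I (Bmul [fset w]%fset f).
Proof. by case=> [[_ [_ h]] _] If; apply: h. Qed.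

Lemma shift2 n (a b w : Zn n) : Bmul [fset w]%fset [fset a; b]%fset = [fset (a + w)%R; (b + w)%R]%fset.
Proof.
apply: fset_ext => x; rewrite in_shift !in_f2; split.
  by case=> <-; [left|right]; rewrite subrK.
by case=> ->; [left|right]; rewrite addrK.
Qed.

Lemma shift3 n (a b c w : Zn n) :
  Bmul [fset w]%fset [fset a; b; c]%fset = [fset (a + w)%R; (b + w)%R; (c + w)%R]%fset.
Proof.
apply: fset_ext => x; rewrite in_shift !in_f3; split.
  by case=> [<-|[<-|<-]]; [left|right;left|right;right]; rewrite subrK.
by case=> [->|[->|->]]; [left|right;left|right;right]; rewrite addrK.
Qed.

Lemma f2C n (a b : Zn n) : [fset a; b]%fset = [fset b; a]%fset.
Proof. by apply: fset_ext => x; rewrite !in_f2; tauto. Qed.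
Lemma f3C1 n (a b c : Zn n) : [fset a; b; c]%fset = [fset b; a; c]%fset.
Proof. by apply: fset_ext => x; rewrite !in_f3; tauto. Qed.
Lemma f3C2 n (a b c : Zn n) : [fset a; b; c]%fset = [fset a; c; b]%fset.
Proof. by apply: fset_ext => x; rewrite !in_f3; tauto. Qed.
Lemma f11 n (a : Zn n) : [fset a; a]%fset = [fset a]%fset.
Proof. by apply: fset_ext => x; rewrite in_f2 in_f1; tauto. Qed.

Lemma I_elim n (I : set (Bpoly n)) f g u : is_tropical_ideal I -> I f -> I g ->
  u \in f -> u \in g -> exists h, I h /\
    (forall x, x \in f -> x \notin g -> x \in h) /\
    (forall x, x \in g -> x \notin f -> x \in h) /\
    (forall x, x \in h -> (x \in f \/ x \in g) /\ x <> u).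
Proof.
case=> _ el If Ig uf ug; case: (el f g u If Ig uf ug) => h [Ih [s1 s2]].
exists h; split=> //; split.
  by move=> x xf xg; apply: s1; left; split=> //; apply/negP.
split; first by move=> x xg xf; apply: s1; right; split=> //; apply/negP.
by move=> x /s2 [fg xu]; split.
Qed.

Lemma nomono n (I : set (Bpoly n)) u : zd3_tropical_ideal I -> ~ I [fset u]%fset.
Proof.
case=> ti [r3 _] Iu; case/rg3_ex: r3 => a [b [c [_ [_ [_ [_ [_ [_ ind]]]]]]]].
apply: (ind [fset a]%fset).
- have -> : [fset a]%fset = Bmul [fset (a - u)%R]%fset [fset u]%fset.
    by apply: fset_ext => x; rewrite in_shift !in_f1 zid3.
  exact: I_shift.
- by apply/negP => /eqP /fsetP /(_ a); rewrite in_fset1 eqxx in_fset0.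
- by move=> x /in_f1 ->; left; left.
Qed.

Lemma pairI n (I : set (Bpoly n)) a b : zd3_tropical_ideal I -> a <> b ->
  I [fset a; b]%fset <-> binomial_lattice I (a - b).
Proof.
move=> zd ab; split; first by move=> h; right; exists a, b.
case=> [/eqP|[u [v [Iuv e]]]]; first by rewrite subr_eq0 => /eqP.
have := I_shift (a - u) zd.1 Iuv; rewrite shift2.
by rewrite (zid2 e) addrC subrK.
Qed.

Lemma L_sym n (I : set (Bpoly n)) w : binomial_lattice I w -> binomial_lattice I (- w).
Proof.
case=> [->|[u [v [Iuv ->]]]]; first by left; rewrite oppr0.
by right; exists v, u; rewrite opprB f2C.
Qed.

Lemma L_subl n (I : set (Bpoly n)) : zd3_tropical_ideal I -> is_sublattice (binomial_lattice I).
Proof.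
move=> zd; split; first by left.
move=> a b La Lb.
case: (EMp (b = 0)) => [->|b0]; first by rewrite subr0.
case: (EMp (a = 0)) => [->|a0]; first by rewrite sub0r; apply: L_sym.
case: La => [//|[u [v [Iuv ea]]]]; case: Lb => [//|[u' [v' [Iuv' eb]]]].
subst a b; rewrite -zid1.
set p := u' + (v - v').
have Ip : I [fset p; v]%fset.
  have := I_shift (v - v') zd.1 Iuv'; rewrite shift2.
  by rewrite [v' + _]addrC subrK.
case: (EMp (u = p)) => [->|up]; first by rewrite subrr; left.
have uv : u <> v by move=> e; apply: (@nomono _ _ v zd); move: Iuv; rewrite e f11.
have pv : p <> v by move=> e; apply: (@nomono _ _ v zd); move: Ip; rewrite e f11.
case: (I_elim zd.1 Iuv Ip (proj2 (in_f2 _ _ _) (or_intror erefl)) (proj2 (in_f2 _ _ _) (or_intror erefl)))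
  => h [Ih [s1 [s2 s3]]].
have eh : h = [fset u; p]%fset.
  apply: fset_ext => x; rewrite in_f2; split.
    by move/s3 => [[/in_f2 [->|->]|/in_f2 [->|->]] xv] //; [left|right].
  case=> ->.
    by apply: s1; [apply/in_f2; left|apply/negP => /in_f2 [] //].
  by apply: s2; [apply/in_f2; left|apply/negP => /in_f2 [e|] //; apply: up].
by right; exists u, p; rewrite -eh.
Qed.

Definition IndT n (I : set (Bpoly n)) (A : set (Zn n)) : Prop :=
  (forall a b, A a -> A b -> a <> b -> ~ binomial_lattice I (a - b)) /\
  (forall a b c d, A a -> A b -> A c -> A d -> a <> b -> a <> c -> a <> d ->
     b <> c -> b <> d -> c <> d -> False) /\
  (forall a b c, A a -> A b -> A c -> a <> b -> a <> c -> b <> c ->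
     ~ I [fset a; b; c]%fset).

Lemma fset_nz n (f : Bpoly n) x : x \in f -> f != Bzero n.
Proof. by move=> xf; apply/negP => /eqP e; move: xf; rewrite e in_fset0. Qed.

Lemma indep_charT n (I : set (Bpoly n)) A : zd3_tropical_ideal I ->
  indepM I A <-> IndT I A.
Proof.
move=> zd; split.
  move=> iA; split.
    move=> a b Aa Ab ab /(pairI zd ab) Iab; apply: (iA _ Iab).
      by apply: (@fset_nz _ _ a); apply/in_f2; left.
    by move=> x /in_f2 [->|->].
  split.
    move=> a b c d Aa Ab Ac Ad ab ac ad bc bd cd.
    case: zd => _ [_ nr4]; apply: nr4; exists (mk4 a b c d); split; first exact: mk4_inj.
    split=> //; rewrite mk4_range => f If nf sf; apply: (iA f If nf).
    by move=> x /sf [[[->|->]|->]|->].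
  move=> a b c Aa Ab Ac ab ac bc Iabc; apply: (iA _ Iabc).
    by apply: (@fset_nz _ _ a); apply/in_f3; left.
  by move=> x /in_f3 [->|[->|->]].
case=> h1 [h2 h3] g Ig /fset0Pn [x xg] sg.
case: (EMp (exists y, y \in g /\ y <> x)) => [[y [yg yx]]|noy]; last first.
  apply: (@nomono _ _ x zd); suff <- : g = [fset x]%fset by [].
  apply: fset_ext => z; rewrite in_f1; split=> [zg|->] //.
  by apply: contrapT => zx; apply: noy; exists z.
case: (EMp (exists z, z \in g /\ z <> x /\ z <> y)) => [[z [zg [zx zy]]]|noz]; last first.
  have eg : g = [fset x; y]%fset.
    apply: fset_ext => z; rewrite in_f2; split=> [zg|[->|->]] //.
    by apply: contrapT => /not_orP [zx zy]; apply: noz; exists z.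
  apply: (h1 x y (sg _ xg) (sg _ yg) (nesym yx)).
  by apply/(pairI zd (nesym yx)); rewrite -eg.
case: (EMp (exists w, w \in g /\ w <> x /\ w <> y /\ w <> z)) => [[w [wg [wx [wy wz]]]]|now]; last first.
  have eg : g = [fset x; y; z]%fset.
    apply: fset_ext => w; rewrite in_f3; split=> [wg|[->|[->|->]]] //.
    apply: contrapT => /not_orP [wx /not_orP [wy wz]]; apply: now; exists w; tauto.
  by apply: (h3 x y z (sg _ xg) (sg _ yg) (sg _ zg) (nesym yx) (nesym zx) (nesym zy)); rewrite -eg.
by apply: (h2 x y z w (sg _ xg) (sg _ yg) (sg _ zg) (sg _ wg)) => //; apply: nesym.
Qed.

Local Notation cs I := (coset (binomial_lattice I)).

Lemma cneq_L n (I : set (Bpoly n)) a b : zd3_tropical_ideal I ->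
  coset (binomial_lattice I) a <> coset (binomial_lattice I) b -> ~ binomial_lattice I (a - b).
Proof. by move=> zd d /(coset_eq _ _ (L_subl zd)). Qed.

Lemma TT_par n (I : set (Bpoly n)) a b c b' : zd3_tropical_ideal I ->
  cs I a <> cs I b -> cs I a <> cs I c -> cs I b <> cs I c -> cs I b' = cs I b ->
  I [fset a; b; c]%fset -> I [fset a; b'; c]%fset.
Proof.
move=> zd ab ac bc eb Iabc.
case: (EMp (b' = b)) => [->|bb] //.
have Ibb : I [fset b; b']%fset.
  by apply/(pairI zd (nesym bb)); apply/(coset_eq _ _ (L_subl zd)); rewrite eb.
have ab' : a <> b' by move=> e; apply: ab; rewrite e eb.
have cb' : c <> b' by move=> e; apply: bc; rewrite e eb.
case: (I_elim zd.1 Iabc Ibb (proj2 (in_f3 _ _ _ _) (or_intror (or_introl erefl)))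
   (proj2 (in_f2 _ _ _) (or_introl erefl))) => h [Ih [s1 [s2 s3]]].
suff -> : [fset a; b'; c]%fset = h by [].
have nab := coset_neq ab; have nac := coset_neq ac; have nbc := coset_neq bc.
apply: fset_ext => x; rewrite in_f3; split.
  case=> [->|[->|->]].
  - by apply: s1; [apply/in_f3; left|apply/negP => /in_f2 [] //].
  - by apply: s2; [apply/in_f2; right|apply/negP => /in_f3 [|[|]] //; apply: nesym].
  - by apply: s1; [apply/in_f3; right; right|apply/negP => /in_f2 [e|] //; apply: nbc].
by move/s3 => [[/in_f3 [->|[->|->]]|/in_f2 [->|->]] xb]; tauto.
Qed.

Lemma TT_line n (I : set (Bpoly n)) a b c d : zd3_tropical_ideal I ->
  cs I a <> cs I b -> cs I a <> cs I c -> cs I a <> cs I d -> cs I b <> cs I c ->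
  cs I b <> cs I d -> cs I c <> cs I d ->
  I [fset a; b; c]%fset -> I [fset a; b; d]%fset -> I [fset a; c; d]%fset.
Proof.
move=> zd ab ac ad bc bd cd Iabc Iabd.
have nab := coset_neq ab; have nac := coset_neq ac; have nad := coset_neq ad.
have nbc := coset_neq bc; have nbd := coset_neq bd; have ncd := coset_neq cd.
case: (I_elim zd.1 Iabc Iabd (proj2 (in_f3 _ _ _ _) (or_intror (or_introl erefl)))
   (proj2 (in_f3 _ _ _ _) (or_intror (or_introl erefl)))) => h [Ih [s1 [s2 s3]]].
have hc : c \in h.
  by apply: s1; [apply/in_f3; right; right|apply/negP => /in_f3 [|[|]] //; apply: nesym].
have hd : d \in h.
  by apply: s2; [apply/in_f3; right; right|apply/negP => /in_f3 [|[|e]] //; [apply: nesym..|apply: ncd]].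
have hs : forall x, x \in h -> x = a \/ x = c \/ x = d.
  by move=> x /s3 [[/in_f3 [->|[->|->]]|/in_f3 [->|[->|->]]] xb]; tauto.
case: (EMp (a \in h)) => ha.
  suff -> : [fset a; c; d]%fset = h by [].
  by apply: fset_ext => x; rewrite in_f3; split; [case=> [->|[->|->]]|move/hs].
exfalso; apply: (cneq_L zd cd); apply/(pairI zd ncd).
suff -> : [fset c; d]%fset = h by [].
apply: fset_ext => x; rewrite in_f2; split; first by case=> ->.
by move=> xh; case: (hs x xh) => [e|]; [subst x; exfalso; apply: ha|].
Qed.

Definition TC n (I : set (Bpoly n)) (X Y Z : set (Zn n)) : Prop :=
  exists a b c, X = cs I a /\ Y = cs I b /\ Z = cs I c /\ I [fset a; b; c]%fset.

Lemma TC_perm1 n (I : set (Bpoly n)) X Y Z : TC I X Y Z -> TC I Y X Z.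
Proof. by case=> a [b [c [-> [-> [-> h]]]]]; exists b, a, c; rewrite -f3C1. Qed.
Lemma TC_perm2 n (I : set (Bpoly n)) X Y Z : TC I X Y Z -> TC I X Z Y.
Proof. by case=> a [b [c [-> [-> [-> h]]]]]; exists a, c, b; rewrite -f3C2. Qed.

Lemma TC_rep n (I : set (Bpoly n)) a b c : zd3_tropical_ideal I ->
  cs I a <> cs I b -> cs I a <> cs I c -> cs I b <> cs I c ->
  TC I (cs I a) (cs I b) (cs I c) -> I [fset a; b; c]%fset.
Proof.
move=> zd ab ac bc [a' [b' [c' [ea [eb [ec h]]]]]].
have d1 : cs I a' <> cs I b' by rewrite -ea -eb.
have d2 : cs I a' <> cs I c' by rewrite -ea -ec.
have d3 : cs I b' <> cs I c' by rewrite -eb -ec.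
have h1 : I [fset a'; b; c']%fset := @TT_par _ _ a' b' c' b zd d1 d2 d3 eb h.
have d4 : cs I b <> cs I a' by rewrite -ea; apply: nesym.
have d5 : cs I b <> cs I c' by rewrite -ec.
have h2 : I [fset b; a; c']%fset.
  by apply: (@TT_par _ _ b a' c' a zd d4 d5 d2 ea); rewrite -f3C1.
have d6 : cs I a <> cs I c' by rewrite -ec.
have d7 : cs I c' <> cs I b by rewrite -ec; apply: nesym.
have h3 : I [fset a; c; b]%fset.
  by apply: (@TT_par _ _ a c' b c zd d6 ab d7 ec); rewrite -f3C2 -f3C1.
by rewrite f3C2.
Qed.

Lemma TC_line n (I : set (Bpoly n)) X Y Z W : zd3_tropical_ideal I ->
  let Q := quotient (binomial_lattice I) in
  Q X -> Q Y -> Q Z -> Q W -> X <> Y -> X <> Z -> X <> W -> Y <> Z -> Y <> W -> Z <> W ->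
  TC I X Y Z -> TC I X Y W -> TC I X Z W.
Proof.
move=> zd Q [a _ <-] [b _ <-] [c _ <-] [d _ <-] ab ac ad bc bd cd h1 h2.
exists a, c, d; do 3!split=> //.
apply: (TT_line zd ab ac ad bc bd cd); exact: TC_rep.
Qed.

Definition line n (I : set (Bpoly n)) (X Y : set (Zn n)) : set (set (Zn n)) :=
  [set Z | quotient (binomial_lattice I) Z /\ (Z = X \/ Z = Y \/ TC I X Y Z)].

Definition Plines n (I : set (Bpoly n)) : set (set (set (Zn n))) :=
  [set B | exists X Y, quotient (binomial_lattice I) X /\ quotient (binomial_lattice I) Y /\
     X <> Y /\ B = line I X Y].

Lemma line_swap n (I : set (Bpoly n)) X Y : line I X Y = line I Y X.
Proof.
by apply/seteqP; split=> Z [QZ h]; split=> //; case: h => [->|[->|/TC_perm1 h]]; tauto.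
Qed.

Lemma line_change n (I : set (Bpoly n)) X Y Z : zd3_tropical_ideal I ->
  quotient (binomial_lattice I) X -> quotient (binomial_lattice I) Y -> X <> Y ->
  line I X Y Z -> Z <> X -> line I X Y = line I X Z.
Proof.
move=> zd QX QY XY [QZ hZ] ZX.
case: (EMp (Z = Y)) => [->|ZY] //.
have tZ : TC I X Y Z by case: hZ => [//|[//|//]].
apply/seteqP; split=> W [QW hW]; split=> //.
  case: (EMp (W = X)) => [->|WX]; first by left.
  case: (EMp (W = Z)) => [->|WZ]; first by right; left.
  case: hW => [//|[->|tW]]; first by right; right; apply: TC_perm2.
  case: (EMp (W = Y)) => [->|WY]; first by right; right; apply: TC_perm2.
  right; right; apply: (TC_line zd QX QY QZ QW XY (nesym ZX) (nesym WX) (nesym ZY) (nesym WY) (nesym WZ) tZ tW).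
case: (EMp (W = X)) => [->|WX]; first by left.
case: (EMp (W = Y)) => [->|WY]; first by right; left.
case: (EMp (W = Z)) => [->|WZ]; first by right; right.
case: hW => [//|[->|tW]]; first by right; right.
right; right; apply: (TC_line zd QX QZ QY QW (nesym ZX) XY (nesym WX) ZY (nesym WZ) (nesym WY) (TC_perm2 tZ) tW).
Qed.

Local Notation QI I := (quotient (binomial_lattice I)).

Lemma line_X n (I : set (Bpoly n)) X Y : QI I X -> line I X Y X.
Proof. by move=> QX; split=> //; left. Qed.
Lemma line_Y n (I : set (Bpoly n)) X Y : QI I Y -> line I X Y Y.
Proof. by move=> QY; split=> //; right; left. Qed.

Lemma line_uniq n (I : set (Bpoly n)) X Y Z W : zd3_tropical_ideal I ->
  QI I X -> QI I Y -> X <> Y -> line I X Y Z -> line I X Y W -> Z <> W ->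
  line I X Y = line I Z W.
Proof.
move=> zd QX QY XY lZ lW ZW.
have QZ : QI I Z by case: lZ.
case: (EMp (Z = X)) => [e|ZX].
  by subst Z; apply: line_change => // e; apply: ZW.
have e1 := line_change zd QX QY XY lZ ZX.
rewrite e1 line_swap; rewrite e1 line_swap in lW.
by apply: line_change => //; apply: nesym.
Qed.

Lemma tp_Plines n (I : set (Bpoly n)) : zd3_tropical_ideal I ->
  two_partition (QI I) (Plines I).
Proof.
move=> zd; split; first by move=> B [X [Y [_ [_ [_ ->]]]]] Z [].
split.
  have [r3 _] := zd.2; case/rg3_ex: r3 => a [b [c [ab [ac [bc [_ [_ [_ ind]]]]]]]].
  case/(indep_charT _ zd): ind => h1 [_ h3].
  have cab : cs I a <> cs I b by move/(coset_eq _ _ (L_subl zd)); apply: h1 => //; [left;left|left;right].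
  have cac : cs I a <> cs I c by move/(coset_eq _ _ (L_subl zd)); apply: h1 => //; [left;left|right].
  have cbc : cs I b <> cs I c by move/(coset_eq _ _ (L_subl zd)); apply: h1 => //; [left;right|right].
  exists (line I (cs I a) (cs I b)), (line I (cs I a) (cs I c)).
  split; first by exists (cs I a), (cs I b); do 3?split=> //; apply: quot_coset.
  split; first by exists (cs I a), (cs I c); do 3?split=> //; apply: quot_coset.
  move=> e; have : line I (cs I a) (cs I b) (cs I c) by rewrite e; apply: line_Y; apply: quot_coset.
  case=> _ [/esym //|[/esym //|]] /(TC_rep zd cab cac cbc).
  by apply: h3 => //; [left;left|left;right|right].
split.
  move=> B [X [Y [QX [QY [XY ->]]]]]; exists X, Y; split; first exact: line_X.
  by split; first exact: line_Y.
move=> Z W QZ QW ZW; exists (line I Z W); split.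
  split; first by exists Z, W.
  by split; [apply: line_X|apply: line_Y].
move=> B' [[X [Y [QX [QY [XY eB]]]]] [b1 b2]]; subst B'.
exact: (esym (line_uniq zd QX QY XY b1 b2 ZW)).
Qed.

Lemma colB_TC n (I : set (Bpoly n)) X Y Z : zd3_tropical_ideal I ->
  QI I X -> QI I Y -> QI I Z -> X <> Y -> X <> Z -> Y <> Z ->
  colB (Plines I) X Y Z <-> TC I X Y Z.
Proof.
move=> zd QX QY QZ XY XZ YZ; split.
  case=> B [[U [V [QU [QV [UV ->]]]]] [bX [bY bZ]]].
  rewrite (line_uniq zd QU QV UV bX bY XY) in bZ.
  by case: bZ => _ [/esym //|[/esym //|]].
move=> t; exists (line I X Y); split; first by exists X, Y.
split; first exact: line_X. split; first exact: line_Y.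
by split=> //; right; right.
Qed.

Lemma indep_LP n (I : set (Bpoly n)) A : zd3_tropical_ideal I ->
  indepM I A <-> IndLP (binomial_lattice I) (Plines I) A.
Proof.
move=> zd; rewrite (indep_charT _ zd); have sL := L_subl zd.
split; case=> h1 [h2 h3]; split=> //; split=> //.
  move=> a b c Aa Ab Ac ab ac bc.
  have cab : cs I a <> cs I b by move/(coset_eq _ _ sL); apply: h1.
  have cac : cs I a <> cs I c by move/(coset_eq _ _ sL); apply: h1.
  have cbc : cs I b <> cs I c by move/(coset_eq _ _ sL); apply: h1.
  move/(colB_TC zd (quot_coset _ _) (quot_coset _ _) (quot_coset _ _) cab cac cbc).
  by move/(TC_rep zd cab cac cbc); apply: h3.
move=> a b c Aa Ab Ac ab ac bc Iabc.
have cab : cs I a <> cs I b by move/(coset_eq _ _ sL); apply: h1.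
have cac : cs I a <> cs I c by move/(coset_eq _ _ sL); apply: h1.
have cbc : cs I b <> cs I c by move/(coset_eq _ _ sL); apply: h1.
apply: (h3 a b c Aa Ab Ac ab ac bc).
apply/(colB_TC zd (quot_coset _ _) (quot_coset _ _) (quot_coset _ _) cab cac cbc).
by exists a, b, c.
Qed.


Lemma transl_K n (u : Zn n) X : transl (- u) (transl u X) = X.
Proof. by apply/seteqP; split=> b; rewrite /transl /= opprK addrK. Qed.
Lemma transl_K' n (u : Zn n) X : transl u (transl (- u) X) = X.
Proof. by apply/seteqP; split=> b; rewrite /transl /= opprK subrK. Qed.

Lemma TC_shift n (I : set (Bpoly n)) u X Y Z : zd3_tropical_ideal I ->
  TC I X Y Z -> TC I (transl u X) (transl u Y) (transl u Z).
Proof.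
move=> zd [a [b [c [-> [-> [-> h]]]]]].
exists (a + u), (b + u), (c + u); rewrite !transl_coset; do 3!split=> //.
by rewrite -shift3; apply: I_shift => //; exact: zd.1.
Qed.

Lemma Q_shift n (L : set (Zn n)) u X : quotient L X -> quotient L (transl u X).
Proof. by case=> a _ <-; rewrite transl_coset; apply: quot_coset. Qed.

Lemma img_line n (I : set (Bpoly n)) u X Y : zd3_tropical_ideal I ->
  transl u @` line I X Y = line I (transl u X) (transl u Y).
Proof.
move=> zd; apply/seteqP; split.
  move=> _ [Z [QZ hZ] <-]; split; first exact: Q_shift.
  case: hZ => [->|[->|t]]; [by left|by right; left|right; right; exact: TC_shift].
move=> Z' [QZ' hZ']; exists (transl (- u) Z'); last exact: transl_K'.
split; first exact: Q_shift.
case: hZ' => [->|[->|t]]; [by left; rewrite transl_K|by right; left; rewrite transl_K|].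
by right; right; have := TC_shift (- u) zd t; rewrite !transl_K.
Qed.

Lemma inv_Plines n (I : set (Bpoly n)) : zd3_tropical_ideal I -> invariant_collection (Plines I).
Proof.
move=> zd u; apply/seteqP; split.
  move=> _ [B [X [Y [QX [QY [XY ->]]]]] <-]; rewrite img_line //.
  exists (transl u X), (transl u Y); do 2?split; try exact: Q_shift.
  by split=> // /transl_inj.
move=> B [X [Y [QX [QY [XY ->]]]]].
exists (line I (transl (- u) X) (transl (- u) Y)); last by rewrite img_line // !transl_K'.
exists (transl (- u) X), (transl (- u) Y); do 2?split; try exact: Q_shift.
by split=> // /transl_inj.
Qed.

Lemma dir1 n (I : set (Bpoly n)) : zd3_tropical_ideal I -> admissible_pair (Phi I).
Proof.
move=> zd; have sL := L_subl zd; have tp := tp_Plines zd.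
have HI : forall A, indepM I A <-> IndLP (binomial_lattice I) (Plines I) A.
  by move=> A; apply: indep_LP.
rewrite /Phi /admissible_pair /= (G_main sL tp HI).
by split=> //; split=> //; apply: inv_Plines.
Qed.

Lemma card_lt n (g h : Bpoly n) y : (forall x, x \in h -> x \in g) -> y \in g -> y \notin h ->
  (#|` h| < #|` g|)%N.
Proof.
move=> s yg yh; apply: fproper_ltn_card; rewrite fproperE; apply/andP; split.
  by apply/fsubsetP => x /s.
by apply/negP => /fsubsetP /(_ y yg); apply/negP.
Qed.

Lemma circ_supp n (I : set (Bpoly n)) C : circM I C -> exists2 g, I g & Bsupp g = C.
Proof.
case=> nI mn; move: nI; rewrite /indepM => /existsNP [g /not_implyP [Ig /not_implyP [nz /contrapT sg]]].
exists g => //; apply/seteqP; split=> // x Cx; apply: contrapT => ng.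
have : Bsupp g `<` C by split=> // h; apply: ng; apply: h.
by move/mn => /(_ g Ig nz); apply.
Qed.

Lemma circ_char n (I : set (Bpoly n)) (f : Bpoly n) : zd3_tropical_ideal I ->
  I f <-> forall u, u \in f -> exists C, circM I C /\ C u /\ C `<=` Bsupp f.
Proof.
move=> zd; split; last first.
  move=> hc.
  have gen : forall s : seq (Zn n), (forall x, x \in s -> x \in f) ->
      exists g, I g /\ (forall x, x \in s -> x \in g) /\ (forall x, x \in g -> x \in f).
    elim=> [|x s IH] hs.
      by exists (Bzero n); split; [case: zd => [[[? _] _] _]|split=> // x; rewrite in_fset0].
    case: IH => [y ys|g [Ig [sg gf]]]; first by apply: hs; rewrite in_cons ys orbT.
    case: (hc x (hs x (mem_head x s))) => C [cC [Cx Cf]].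
    case: (circ_supp cC) => g' Ig' eg'.
    exists (Badd g g'); split; first by case: zd => [[[_ [hU _]] _] _]; apply: hU.
    split.
      move=> y; rewrite in_cons => /orP [/eqP ->|ys]; apply/in_Badd; [right|left].
        by have : Bsupp g' x by rewrite eg'.
      exact: sg.
    move=> y /in_Badd [/gf //|yg']; apply: Cf; rewrite -eg'; exact: yg'.
  case: (gen (enum_fset f)) => // g [Ig [sg gf]].
  suff -> : f = g by [].
  by apply: fset_ext => x; split; [apply: sg|apply: gf].
move=> If u uf.
pose Pk k := `[< exists g, I g /\ u \in g /\ (forall x, x \in g -> x \in f) /\ #|` g| = k >].
have exP : exists k, Pk k by exists #|` f|; apply/asboolP; exists f.
case: (ex_minnP exP) => m /asboolP [g [Ig [ug [gf eg]]]] mmin.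
exists (Bsupp g); split; last by split=> // x /gf.
split; first by move/(_ g Ig (fset_nz ug)); apply.
move=> D [DG GD] h Ih nh sh.
have [y yg yD] : exists2 y, y \in g & ~ D y.
  by apply: contrapT => ne; apply: GD => y yg; apply: contrapT => nD; apply: ne; exists y.
case: (EMp (u \in h)) => uh.
  have lt : (#|` h| < #|` g|)%N.
    by apply: (card_lt (y := y)) => // [x /sh /DG //|]; apply/negP => /sh.
  have : (m <= #|` h|)%N by apply: mmin; apply/asboolP; exists h; do 3!split=> //; move=> x /sh /DG /gf.
  by rewrite -eg leqNgt lt.
case/fset0Pn: nh => w wh.
have wg : w \in g by apply: DG; apply: sh.
case: (I_elim zd.1 Ig Ih wg wh) => k [Ik [s1 [s2 s3]]].
have kg : forall x, x \in k -> x \in g by move=> x /s3 [[//|/sh /DG //] _].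
have uk : u \in k by apply: s1 => //; apply/negP.
have lt : (#|` k| < #|` g|)%N.
  by apply: (card_lt (y := w)) => //; apply/negP => /s3 [_].
have : (m <= #|` k|)%N by apply: mmin; apply/asboolP; exists k; do 3!split=> //; move=> x /kg /gf.
by rewrite -eg leqNgt lt.
Qed.

Lemma indep_si n (I : set (Bpoly n)) A : zd3_tropical_ideal I ->
  indepM I A <-> IndLP (binomial_lattice I) (si_hyperplanes I) A.
Proof.
move=> zd; have sL := L_subl zd; have tp := tp_Plines zd.
have HI : forall A, indepM I A <-> IndLP (binomial_lattice I) (Plines I) A.
  by move=> B; apply: indep_LP.
by rewrite (G_main sL tp HI).
Qed.

Lemma dir2 n (I J : set (Bpoly n)) : zd3_tropical_ideal I -> zd3_tropical_ideal J ->
  Phi I = Phi J -> I = J.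
Proof.
move=> zI zJ e.
have eL : binomial_lattice I = binomial_lattice J by have := congr1 fst e.
have eH : si_hyperplanes I = si_hyperplanes J by have := congr1 snd e.
have eM : indepM I = indepM J.
  apply: funext => A; apply: propext.
  by rewrite (indep_si _ zI) (indep_si _ zJ) eL eH.
have eC : circM I = circM J by rewrite /circM eM.
apply: funext => f; apply: propext.
by rewrite (circ_char _ zI) (circ_char _ zJ) eC.
Qed.

Theorem mainTheorem6 (n : nat) :
  (forall I : set (Bpoly n), zd3_tropical_ideal I -> admissible_pair (Phi I)) /\
  (forall I J : set (Bpoly n), zd3_tropical_ideal I -> zd3_tropical_ideal J ->
      Phi I = Phi J -> I = J) /\
  (forall LP : set (Zn n) * set (set (set (Zn n))), admissible_pair LP ->
      exists I : set (Bpoly n), zd3_tropical_ideal I /\ Phi I = LP).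
Proof.
split; first exact: dir1.
split; first exact: dir2.
move=> LP hLP; exact: (surjLP hLP).
Qed.
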